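(* Let $(\mathbf x,\mathbf p,\mu)$ be a deterministic TFM satisfying UIC and $1$-SCP. If $x_i(\mathbf b_{-i},b_i)=x_i(\mathbf b_{-i},b_i')$ for some bid vector $\mathbf b$, user $i$ and bid $b_i'\ge0$, then $\mu(\mathbf b_{-i},b_i)=\mu(\mathbf b_{-i},b_i')$.
   Context: Setting (TFM). Each user $i$ has a true value $v_i\ge0$ and submits a single bid $b_i\ge0$; $\mathbf b=(b_1,\dots,b_m)$, $\mathbf b_{-i}$ the other bids. A TFM has an inclusion rule (run by the miner) and confirmation, payment and miner-revenue rules (run by the blockchain on included bids). Composing the honest inclusion rule with the others gives deterministic $(\mathbf x,\mathbf p,\mu)$: $x_i(\mathbf b)\in\{0,1\}$ indicates confirmation of user $i$, $p_i(\mathbf b)\le b_i$ its payment ($0$ if unconfirmed), $\mu(\mathbf b)$ the miner revenue. Strategic players may bid untruthfully after seeing all other bids, inject fake bids (true value $0$), and (if the miner is involved) choose which bids to include. Utility: miner revenue (if the miner is in the player) plus $v-p$ for each confirmed transaction of the player with true value $v$ and payment $p$. UIC: with an honest miner each user's utility is maximized by truthful bidding, whatever the other bids. $1$-SCP: for every coalition of the miner and one user, joint utility is maximized by truthful bidding and honest miner behavior, whatever the other bids. *)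

(* Defs.v *)
From HB Require Import structures.
From mathcomp Require Import all_boot all_order all_algebra.
From mathcomp Require Import reals.
Set Implicit Arguments. Unset Strict Implicit. Unset Printing Implicit Defensive.
Import Order.TTheory GRing.Theory Num.Theory.
Local Open Scope ring_scope.

(* Bid vectors are sequences of reals; user i owns entry i.
   - incl b : the honest inclusion rule (run by the miner): the block, given
     as a list of indices into b (the included bids, in block order);
   - conf bs, pay bs, rev bs : the confirmation, payment and miner-revenue
     rules run by the blockchain on the list bs of included bid values;
     entry k of conf bs / pay bs refers to entry k of the block. *)
Record TFM (R : realType) := MkTFM {
  incl : seq R -> seq nat;
  conf : seq R -> seq bool;
  pay  : seq R -> seq R;
  rev  : seq R -> R }.

Definition block_bids (R : realType) (b : seq R) (B : seq nat) : seq R :=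
  [seq nth 0 b j | j <- B].

Definition valid_block (R : realType) (b : seq R) (B : seq nat) : bool :=
  uniq B && all (fun j => (j < size b)%N) B.

Definition confB (R : realType) (M : TFM R) (b : seq R) (B : seq nat) (i : nat)
  : bool :=
  (i \in B) && nth false (conf M (block_bids b B)) (index i B).

Definition payB (R : realType) (M : TFM R) (b : seq R) (B : seq nat) (i : nat)
  : R :=
  if confB M b B i then nth 0 (pay M (block_bids b B)) (index i B) else 0.

Definition revB (R : realType) (M : TFM R) (b : seq R) (B : seq nat) : R :=
  rev M (block_bids b B).

Definition x (R : realType) (M : TFM R) (b : seq R) (i : nat) : bool :=
  confB M b (incl M b) i.
Definition p (R : realType) (M : TFM R) (b : seq R) (i : nat) : R :=
  payB M b (incl M b) i.
Definition mu (R : realType) (M : TFM R) (b : seq R) : R :=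
  revB M b (incl M b).

Definition nonneg (R : realType) (s : seq R) : bool := all (fun r => 0 <= r) s.

Definition util (R : realType) (M : TFM R) (b : seq R) (B : seq nat) (i : nat)
  (v : R) : R :=
  if confB M b B i then v - payB M b B i else 0.

(* utility collected from fake bids f appended after the first n bids *)
Definition fake_util (R : realType) (M : TFM R) (b : seq R) (B : seq nat)
  (n : nat) (f : seq R) : R :=
  \sum_(k < size f) util M b B (n + k) 0.

Definition honest_valid (R : realType) (M : TFM R) : Prop :=
  forall b : seq R, valid_block b (incl M b).

Definition pay_le_bid (R : realType) (M : TFM R) : Prop :=
  forall (bs : seq R) (k : nat), (k < size bs)%N ->
    nth false (conf M bs) k -> nth 0 (pay M bs) k <= nth 0 bs k.

(* UIC: honest miner; user i with true value v prefers bidding v to bidding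
   any bi' and injecting any fake bids f (appended to the bid vector). *)
Definition UIC (R : realType) (M : TFM R) : Prop :=
  forall (b : seq R) (i : nat) (v bi' : R) (f : seq R),
    nonneg b -> (i < size b)%N -> 0 <= v -> 0 <= bi' -> nonneg f ->
    let bt := set_nth 0 b i v in
    let bd := set_nth 0 b i bi' ++ f in
    util M bd (incl M bd) i v + fake_util M bd (incl M bd) (size b) f
      <= util M bt (incl M bt) i v.

(* 1-SCP: coalition of the miner and user i; deviations: bid bi', inject fake
   bids f, and form any legal block B from the resulting bids. *)
Definition SCP1 (R : realType) (M : TFM R) : Prop :=
  forall (b : seq R) (i : nat) (v bi' : R) (f : seq R) (B : seq nat),
    nonneg b -> (i < size b)%N -> 0 <= v -> 0 <= bi' -> nonneg f ->
    let bt := set_nth 0 b i v in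
    let bd := set_nth 0 b i bi' ++ f in
    valid_block bd B ->
    revB M bd B + util M bd B i v + fake_util M bd B (size b) f
      <= mu M bt + util M bt (incl M bt) i v.

(* Main.v *)
Require Import Defs.
From HB Require Import structures.
From mathcomp Require Import all_boot all_order all_algebra.
From mathcomp Require Import reals.
Import Order.TTheory GRing.Theory Num.Theory.
Local Open Scope ring_scope.

Lemma set_nth_id (R : realType) (b : seq R) i :
  (i < size b)%N -> set_nth 0 b i (nth 0 b i) = b.
Proof.
move=> hi; apply: (@eq_from_nth _ 0).
  by rewrite size_set_nth; apply/maxn_idPr.
by move=> j _; rewrite nth_set_nth /=; case: eqP => // ->.
Qed.

Lemma nonneg_set (R : realType) (b : seq R) i v :
  nonneg b -> (i < size b)%N -> 0 <= v -> nonneg (set_nth 0 b i v).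
Proof.
move=> /all_nthP hb hi hv; apply/(all_nthP 0) => j.
rewrite size_set_nth (maxn_idPr hi) => hj.
by rewrite nth_set_nth /=; case: eqP => // _; apply: hb.
Qed.

Lemma fake0 (R : realType) (M : TFM R) b B n : fake_util M b B n [::] = 0.
Proof. by rewrite /fake_util big_ord0. Qed.

Lemma oneway (R : realType) (M : TFM R) :
  honest_valid M -> UIC M -> SCP1 M ->
  forall (b : seq R) (i : nat) (bi' : R),
    nonneg b -> (i < size b)%N -> 0 <= bi' ->
    x M b i = x M (set_nth 0 b i bi') i ->
    mu M (set_nth 0 b i bi') <= mu M b.
Proof.
move=> hv hU hS b i bi' hb hi hbi hx.
set v := nth 0 b i.
have v0 : 0 <= v by move/all_nthP: hb => /(_ 0 i hi).
set b' := set_nth 0 b i bi'.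
have hb' : nonneg b' by exact: nonneg_set.
have hi' : (i < size b')%N by rewrite size_set_nth (maxn_idPr hi).
have e1 : set_nth 0 b i v = b by exact: set_nth_id.
have e2 : set_nth 0 b' i v = b by rewrite /b' set_set_nth eqxx.
have e3 : set_nth 0 b' i bi' = b' by rewrite /b' set_set_nth eqxx.
have S := hS b i v bi' [::] (incl M b') hb hi v0 hbi is_true_true.
rewrite /= e1 cats0 fake0 addr0 in S.
have := S (hv b'); rewrite /revB -/(mu M b') => {}S.
have U1 := hU b i v bi' [::] hb hi v0 hbi is_true_true.
rewrite /= e1 cats0 fake0 addr0 in U1.
have U2 := hU b' i bi' v [::] hb' hi' hbi v0 is_true_true.
rewrite /= e2 e3 cats0 fake0 addr0 in U2.
move: S U1 U2; rewrite /util -/(x M b i) -/(x M b' i) -/(p M b i) -/(p M b' i) -hx.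
case: (x M b i) => S U1 U2; last by rewrite !addr0 in S.
have ep : p M b i = p M b' i.
  apply/eqP; rewrite eq_le; apply/andP; split.
    by move: U1; rewrite lerD2l lerN2.
  by move: U2; rewrite lerD2l lerN2.
by move: S; rewrite ep lerD2r.
Qed.

Theorem mainTheorem11 (R : realType) (M : TFM R) :
  honest_valid M -> pay_le_bid M -> UIC M -> SCP1 M ->
  forall (b : seq R) (i : nat) (bi' : R),
    nonneg b -> (i < size b)%N -> 0 <= bi' ->
    x M b i = x M (set_nth 0 b i bi') i ->
    mu M b = mu M (set_nth 0 b i bi').
Proof.
move=> hv _ hU hS b i bi' hb hi hbi hx.
apply/eqP; rewrite eq_le; apply/andP; split; last exact: (@oneway _ M hv hU hS b i bi' hb hi hbi hx).
have v0 : 0 <= nth 0 b i by move/all_nthP: hb => /(_ 0 i hi).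
have hb' : nonneg (set_nth 0 b i bi') by exact: nonneg_set.
have hi' : is_true (leq i.+1 (size (set_nth 0 b i bi'))) by rewrite size_set_nth (maxn_idPr hi).
have := @oneway _ M hv hU hS (set_nth 0 b i bi') i (nth 0 b i) hb' hi' v0.
set c := set_nth _ (set_nth _ b i bi') i _.
have ec : c = b by rewrite /c set_set_nth eqxx; exact: set_nth_id.
rewrite ec; apply; by rewrite hx.
Qed.
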